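(* Let $X$ be an extremally disconnected topological space in which every $\Lambda$-set is open, and let $g,f:X\to\mathbb{R}$ be functions such that $f$ is lower semi-contra-continuous, $g$ is upper semi-contra-continuous, and $g\le f$. Then there exists a contra-continuous function $h:X\to\mathbb{R}$ such that $g\le h\le f$.
   Context: A $\Lambda$-set in $X$ is an intersection of open sets. A function $f:X\to\mathbb{R}$ is upper semi-contra-continuous (resp. lower semi-contra-continuous) if $f^{-1}(-\infty,t)$ (resp. $f^{-1}(t,+\infty)$) is closed in $X$ for every real $t$. A function $h:X\to\mathbb{R}$ is contra-continuous if the preimage of every open subset of $\mathbb{R}$ is closed in $X$. $g\le f$ means $g(x)\le f(x)$ for all $x\in X$. *)

(* Defs.v *)
From HB Require Import structures.
From mathcomp Require Import all_boot all_order all_algebra.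
From mathcomp Require Import all_classical all_reals all_analysis.
Set Implicit Arguments. Unset Strict Implicit. Unset Printing Implicit Defensive.
Import Order.TTheory GRing.Theory Num.Theory.
Import numFieldNormedType.Exports.
Local Open Scope classical_set_scope.
Local Open Scope ring_scope.

Definition extremally_disconnected (X : topologicalType) : Prop :=
  forall U : set X, open U -> open (closure U).

Definition Lambda_set (X : topologicalType) (A : set X) : Prop :=
  exists (I : Type) (F : I -> set X),
    (forall i, open (F i)) /\ A = \bigcap_(i in [set: I]) F i.

Definition upper_semi_contra_continuous (X : topologicalType) (R : realType)
  (f : X -> R) : Prop :=
  forall t : R, closed (f @^-1` [set x | x < t]).

Definition lower_semi_contra_continuous (X : topologicalType) (R : realType)
  (f : X -> R) : Prop :=
  forall t : R, closed (f @^-1` [set x | t < x]).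

Definition contra_continuous (X : topologicalType) (R : realType)
  (h : X -> R) : Prop :=
  forall U : set R, open U -> closed (h @^-1` U).

(* Main.v *)
Require Import Defs.
From HB Require Import structures.
From mathcomp Require Import all_boot all_order all_algebra.
From mathcomp Require Import all_classical all_reals all_analysis.
Import Order.TTheory GRing.Theory Num.Theory.
Import numFieldNormedType.Exports.
Local Open Scope classical_set_scope.
Local Open Scope ring_scope.
Set Implicit Arguments. Unset Strict Implicit.

Definition spec_le (X : topologicalType) (x y : X) : Prop :=
  forall U : set X, open U -> U x -> U y.

Definition Dset (X : topologicalType) (x : X) : set X :=
  [set w | exists z, spec_le x z /\ spec_le w z].

Lemma spec_le_trans (X : topologicalType) (x y z : X) :
  spec_le x y -> spec_le y z -> spec_le x z.
Proof. by move=> h1 h2 U oU Ux; apply: h2 => //; apply: h1. Qed.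

Lemma closed_down (X : topologicalType) (C : set X) (x y : X) :
  closed C -> spec_le x y -> C y -> C x.
Proof.
move=> cC hxy Cy; apply: cC => B; rewrite nbhsE => -[V [oV Vx] VB].
by exists y; split => //; apply: VB; apply: hxy.
Qed.

Lemma K_open (X : topologicalType) (hL : forall A : set X, Lambda_set A -> open A)
  (x : X) : open [set y | spec_le x y].
Proof.
apply: hL.
exists {U : set X | open U /\ U x}, (fun U => proj1_sig U); split.
  by move=> U; exact: (proj1 (proj2_sig U)).
apply/seteqP; split.
  by move=> y hy U _; apply: hy; [exact: (proj1 (proj2_sig U)) | exact: (proj2 (proj2_sig U))].
by move=> y hy U oU Ux; exact: (hy (exist _ U (conj oU Ux)) I).
Qed.

Lemma D_closure (X : topologicalType) (hL : forall A : set X, Lambda_set A -> open A)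
  (x : X) : Dset x = closure [set y | spec_le x y].
Proof.
apply/seteqP; split.
  move=> w [z [hxz hwz]] B; rewrite nbhsE => -[V [oV Vw] VB].
  by exists z; split => //; apply: VB; apply: hwz.
move=> w hw.
have [z [hxz hwz]] : [set y | spec_le x y] `&` [set y | spec_le w y] !=set0.
  by apply: hw; apply: open_nbhs_nbhs; split; [exact: K_open | move=> U _ Uw].
by exists z.
Qed.

Lemma D_open (X : topologicalType) (hX : extremally_disconnected X)
  (hL : forall A : set X, Lambda_set A -> open A) (x : X) : open (Dset x).
Proof. by rewrite D_closure //; apply: hX; apply: K_open. Qed.

Lemma D_sub (X : topologicalType) (hX : extremally_disconnected X)
  (hL : forall A : set X, Lambda_set A -> open A) (x y : X) :
  Dset x y -> Dset y `<=` Dset x.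
Proof.
move=> hy w [z [hyz hwz]].
have : Dset x z by apply: (hyz _ (D_open hX hL x)).
move=> [z' [hxz' hzz']]; exists z'; split => //.
exact: spec_le_trans hwz hzz'.
Qed.

Lemma D_eq (X : topologicalType) (hX : extremally_disconnected X)
  (hL : forall A : set X, Lambda_set A -> open A) (x y : X) :
  Dset x y -> Dset y = Dset x.
Proof.
move=> hy; apply/seteqP; split; first exact: D_sub.
apply: D_sub => //; move: hy => [z [h1 h2]]; by exists z.
Qed.

Theorem corollary1 (R : realType) (X : topologicalType)
  (hX : extremally_disconnected X)
  (hL : forall A : set X, Lambda_set A -> open A)
  (g f : X -> R)
  (hf : lower_semi_contra_continuous f)
  (hg : upper_semi_contra_continuous g)
  (hgf : forall x, g x <= f x) :
  exists h : X -> R, contra_continuous h /\ (forall x, g x <= h x /\ h x <= f x).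
Proof.
have fanti : forall x y, spec_le x y -> f y <= f x.
  move=> x y hxy; rewrite leNgt; apply/negP => hlt.
  have := closed_down (hf (f x)) hxy hlt.
  by rewrite /= ltxx.
have gmono : forall x y, spec_le x y -> g x <= g y.
  move=> x y hxy; rewrite leNgt; apply/negP => hlt.
  have := closed_down (hg (g x)) hxy hlt.
  by rewrite /= ltxx.
have bnd : forall x w, Dset x w -> g w <= f x.
  move=> x w [z [hxz hwz]].
  apply: le_trans (gmono _ _ hwz) _; apply: le_trans (hgf z) _; exact: fanti.
have Dself : forall x : X, Dset x x.
  by move=> x; exists x; split; move=> U _ Ux.
have ne : forall x : X, (g @` Dset x) !=set0.
  by move=> x; exists (g x); exists x; [exact: Dself|].
have ub : forall x : X, ubound (g @` Dset x) (f x).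
  by move=> x _ [w hw <-]; exact: bnd.
exists (fun x => sup (g @` Dset x)); split.
  move=> U _ w hw.
  have [z [/= Uz hwz]] : (fun x => sup (g @` Dset x)) @^-1` U `&` [set y | spec_le w y] !=set0.
    by apply: hw; apply: open_nbhs_nbhs; split; [exact: K_open | move=> V _ Vw].
  have Dwz : Dset w z by exists z; split => //; move=> V _ Vz.
  by rewrite /= -(D_eq hX hL Dwz).
move=> x; split.
  apply: ub_le_sup; [by exists (f x); exact: ub | by exists x; [exact: Dself|]].
exact: ge_sup (ne x) (ub x).
Qed.
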